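(* Let $\mathcal C$ be a binary linear code presented by an $m\times n$ parity-check matrix $H$, let $\mathbf c\in\mathcal C$ be a codeword, let $\boldsymbol\omega$ be a linear programming pseudocodeword, and let $\Psi=\{\boldsymbol\psi_1,\dots,\boldsymbol\psi_r\}$ be a set of linear programming pseudocodewords, with $\Psi^{\mathbf c}=\{\boldsymbol\psi_1^{\mathbf c},\dots,\boldsymbol\psi_r^{\mathbf c}\}$. Let $\phi_{\mathbf c}:\mathbb R^n\to\mathbb R^n$ be defined by $x_i\mapsto(-1)^{c_i}x_i$ for all $i=1,\dots,n$. Then $\phi_{\mathbf c}$ is an isometry from the recovery cone $\mathcal K_{\boldsymbol\omega}$ onto $\mathcal K_{\boldsymbol\omega^{\mathbf c}}$, and an isometry from the approximation cone $\mathcal R_{\boldsymbol\omega,\Psi}$ onto $\mathcal R_{\boldsymbol\omega^{\mathbf c},\Psi^{\mathbf c}}$.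
   Context: For a row $\mathbf h_j$ of $H=(h_{j,i})$ let $N(\mathbf h_j)=\{i : h_{j,i}=1\}$. The fundamental polytope $\mathcal P(H)$ is written as $\{\mathbf x: A\mathbf x\ge\mathbf b\}$ with the following constraints (rows of $A$ with right-hand sides): $x_i\ge 0$ and $-x_i\ge -1$ for each $i=1,\dots,n$; and for every row index $j$ and every odd-sized $S\subseteq N(\mathbf h_j)$, $-\sum_{i\in S}x_i+\sum_{i'\in N(\mathbf h_j)\setminus S}x_{i'}\ge 1-|S|$. A linear programming (LP) pseudocodeword is an extreme point of $\mathcal P(H)$. For $\mathbf c\in\mathcal C$ and $\mathbf x\in\mathcal P(H)$, the relative point $\mathbf x^{\mathbf c}$ has $i$th coordinate $|x_i-c_i|$; if $\boldsymbol\omega$ is an LP pseudocodeword, so is $\boldsymbol\omega^{\mathbf c}$. The recovery cone $\mathcal K_{\boldsymbol\omega}$ is the set of conic (nonnegative) combinations of the rows of $A$ whose constraints are active (hold with equality) at $\boldsymbol\omega$. The approximation cone $\mathcal R_{\boldsymbol\omega,\Psi}$ is $\{\mathbf x\in\mathbb R^n : (\boldsymbol\psi_i-\boldsymbol\omega)^T\mathbf x\ge 0 \text{ for } i=1,\dots,r\}$. *)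

(* Defs.v *)
From mathcomp Require Import all_boot all_order all_algebra reals.
Set Implicit Arguments. Unset Strict Implicit. Unset Printing Implicit Defensive.
Import Order.TTheory GRing.Theory Num.Theory.
Local Open Scope ring_scope.

Section Defs.
Variables (R : realType) (m n : nat).

Definition codeword (H : 'M['F_2]_(m, n)) (c : 'rV['F_2]_n) : Prop :=
  H *m c^T = 0.

Definition bitR (c : 'rV['F_2]_n) (i : 'I_n) : R := (nat_of_ord (c 0 i))%:R.

Definition Nrow (H : 'M['F_2]_(m, n)) (j : 'I_m) : {set 'I_n} :=
  [set i | H j i == 1].

(* indices of the rows of A: inl (i,false): x_i >= 0 ; inl (i,true): -x_i >= -1 ;
   inr (j,S): the parity constraint for row j and S (valid when S is an
   odd-sized subset of N(h_j)). *)
Definition cidx := (('I_n * bool) + ('I_m * {set 'I_n}))%type.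

Definition cvalid (H : 'M['F_2]_(m, n)) (k : cidx) : bool :=
  match k with
  | inl _ => true
  | inr (j, T) => (T \subset Nrow H j) && odd #|T|
  end.

Definition Arow (H : 'M['F_2]_(m, n)) (k : cidx) : 'rV[R]_n :=
  match k with
  | inl (i, false) => \row_(i' < n) (if i' == i then 1 else 0)
  | inl (i, true) => \row_(i' < n) (if i' == i then -1 else 0)
  | inr (j, T) => \row_(i' < n)
      (if i' \in T then -1 else if i' \in Nrow H j then 1 else 0)
  end.

Definition brhs (k : cidx) : R :=
  match k with
  | inl (_, false) => 0
  | inl (_, true) => -1
  | inr (_, T) => 1 - (#|T|)%:R
  end.

Definition dotp (a x : 'rV[R]_n) : R := \sum_(i < n) a 0 i * x 0 i.

Definition fpolytope (H : 'M['F_2]_(m, n)) (x : 'rV[R]_n) : Prop :=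
  forall k, cvalid H k -> brhs k <= dotp (Arow H k) x.

Definition extreme_point (P : 'rV[R]_n -> Prop) (x : 'rV[R]_n) : Prop :=
  P x /\ forall y z t, P y -> P z -> 0 < t < 1 ->
    x = t *: y + (1 - t) *: z -> y = z.

Definition LP_pseudocodeword (H : 'M['F_2]_(m, n)) (w : 'rV[R]_n) : Prop :=
  extreme_point (fpolytope H) w.

Definition relpt (c : 'rV['F_2]_n) (x : 'rV[R]_n) : 'rV[R]_n :=
  \row_(i < n) `|x 0 i - bitR c i|.

Definition active (H : 'M['F_2]_(m, n)) (w : 'rV[R]_n) (k : cidx) : bool :=
  cvalid H k && (dotp (Arow H k) w == brhs k).

Definition recovery_cone (H : 'M['F_2]_(m, n)) (w : 'rV[R]_n)
    (x : 'rV[R]_n) : Prop :=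
  exists lam : cidx -> R,
    (forall k, 0 <= lam k) /\ (forall k, lam k != 0 -> active H w k) /\
    x = \sum_(k : cidx) lam k *: Arow H k.

Definition approx_cone (r : nat) (w : 'rV[R]_n) (Psi : 'I_r -> 'rV[R]_n)
    (x : 'rV[R]_n) : Prop :=
  forall l : 'I_r, 0 <= dotp (Psi l - w) x.

Definition phi (c : 'rV['F_2]_n) (x : 'rV[R]_n) : 'rV[R]_n :=
  \row_(i < n) ((-1) ^+ nat_of_ord (c 0 i) * x 0 i).

Definition edist (x y : 'rV[R]_n) : R :=
  Num.sqrt (\sum_(i < n) (x 0 i - y 0 i) ^+ 2).

Definition isometry_onto (f : 'rV[R]_n -> 'rV[R]_n)
    (A B : 'rV[R]_n -> Prop) : Prop :=
  [/\ forall x y, A x -> A y -> edist (f x) (f y) = edist x y,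
      forall x, A x -> B (f x)
    & forall y, B y -> exists x, A x /\ f x = y].

End Defs.

(* Main.v *)
Require Import Defs.
From mathcomp Require Import all_boot all_order all_algebra reals.
From mathcomp Require Import ring.
Import Order.TTheory GRing.Theory Num.Theory.
Set Implicit Arguments. Unset Strict Implicit.
Local Open Scope ring_scope.

Section Helpers.
Variables (R : realType) (m n : nat) (H : 'M['F_2]_(m, n)) (c : 'rV['F_2]_n).

Lemma F2v (x : 'F_2) : (nat_of_ord x = 0%N) \/ (nat_of_ord x = 1%N).
Proof. by case: x => [[|[|k]] // Hk]; [left|right]. Qed.

Lemma F2e (x : 'F_2) : x = 0 \/ x = 1.
Proof. by case: x => [[|[|k]] // Hk]; [left|right]; apply/val_inj. Qed.

Definition box (w : 'rV[R]_n) := forall i, 0 <= w 0 i <= 1.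

Lemma phiK (x : 'rV[R]_n) : phi c (phi c x) = x.
Proof.
apply/rowP => i; rewrite !mxE.
by case: (F2v (c 0 i)) => ->; rewrite ?expr0 ?expr1; ring.
Qed.

Lemma normb a i : 0 <= a <= 1 ->
  `|a - bitR R c i| = ((-1) ^+ (c 0 i : nat)) * (a - bitR R c i).
Proof.
move=> /andP [a0 a1]; rewrite /bitR.
case: (F2v (c 0 i)) => ->; rewrite ?expr0 ?expr1 /=.
  by rewrite subr0 mul1r ger0_norm.
by rewrite ler0_norm ?mulN1r // subr_le0.
Qed.

Lemma box_relpt w : box w -> box (relpt c w).
Proof.
move=> bw i; rewrite mxE normb // /bitR.
have /andP [a0 a1] := bw i.
case: (F2v (c 0 i)) => ->; rewrite ?expr0 ?expr1 /=.
  by rewrite subr0 mul1r a0 a1.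
by rewrite mulN1r opprB subr_ge0 a1 lerBlDr lerDl a0.
Qed.

Lemma relptK w : box w -> relpt c (relpt c w) = w.
Proof.
move=> bw; apply/rowP => i.
have := box_relpt bw i; rewrite mxE normb ?bw // => b2.
rewrite mxE normb // mxE normb // /bitR.
by case: (F2v (c 0 i)) => ->; rewrite ?expr0 ?expr1 /=; ring.
Qed.

Lemma edist_phi (x y : 'rV[R]_n) : edist (phi c x) (phi c y) = edist x y.
Proof.
rewrite /edist; congr Num.sqrt; apply eq_bigr => i _; rewrite !mxE.
by case: (F2v (c 0 i)) => ->; rewrite ?expr0 ?expr1; ring.
Qed.

Lemma approx_phi r w (Psi : 'I_r -> 'rV[R]_n) x : box w ->
  (forall l, box (Psi l)) -> approx_cone w Psi x ->
  approx_cone (relpt c w) (fun l => relpt c (Psi l)) (phi c x).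
Proof.
move=> bw bP A l; have := A l.
suff -> : dotp (relpt c (Psi l) - relpt c w) (phi c x) = dotp (Psi l - w) x by [].
rewrite /dotp; apply eq_bigr => i _; move: (bw i) (bP l i) => b1 b2; rewrite !mxE !normb //.
by case: (F2v (c 0 i)) => ->; rewrite ?expr0 ?expr1; ring.
Qed.

Definition Cj (j : 'I_m) : {set 'I_n} :=
  [set i in Nrow H j | (c 0 i : nat) == 1%N].
Definition symd (T C : {set 'I_n}) : {set 'I_n} :=
  [set i | (i \in T) (+) (i \in C)].
Definition sig (k : cidx m n) : cidx m n :=
  match k with
  | inl (i, b) => inl (i, b (+) ((c 0 i : nat) == 1%N))
  | inr (j, T) => inr (j, symd T (Cj j))
  end.

Lemma sigK : involutive sig.
Proof.
case => [[i b]|[j T]] /=; first by rewrite addbK.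
by congr inr; congr pair; apply/setP => i; rewrite !inE addbK.
Qed.


Lemma phi_sum (I : finType) (lam : I -> R) (A : I -> 'rV[R]_n) :
  phi c (\sum_k lam k *: A k) = \sum_k lam k *: phi c (A k).
Proof.
apply/rowP => i; rewrite mxE !summxE mulr_sumr; apply eq_bigr => k _.
by rewrite !mxE mulrCA.
Qed.

Lemma phi_Arow k : cvalid H k -> phi c (Arow R H k) = Arow R H (sig k).
Proof.
case: k => [[i b]|[j T]] /= Hv.
  case: (F2v (c 0 i)) => e; rewrite e /=; apply/rowP => i'; rewrite !mxE;
  (have [-> | ne] := eqVneq i' i; [rewrite e | ]); case: b; rewrite /= ?mxE ?eqxx ?(negbTE ne) ?expr0 ?expr1 /=;
  ring.
apply/rowP => i'; rewrite !mxE /symd /Cj !inE.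
have sub := subsetP (andP Hv).1 i'; rewrite /Nrow inE in sub.
case: (F2v (c 0 i')) => ->; rewrite ?expr0 ?expr1 /=;
case: (i' \in T) sub => [-> //|_]; case: (H j i' == 1) => /=; ring.
Qed.

Lemma card_sumR (K : pzSemiRingType) (A : {set 'I_n}) :
  (#|A|%:R : K) = \sum_i (i \in A)%:R.
Proof.
rewrite -sum1_card natr_sum big_mkcond /=; apply eq_bigr => i _.
by case: (i \in A).
Qed.

Lemma sum_delta (f : 'I_n -> R) i a :
  \sum_i' f i' * (\row_(i0 < n) (if i0 == i then a else 0)) 0 i' = f i * a.
Proof.
rewrite (bigD1 i) //= mxE eqxx big1 ?addr0 // => i' ne.
by rewrite mxE (negbTE ne) mulr0.
Qed.

Lemma sum_deltaL (f : 'I_n -> R) i a :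
  \sum_i' (\row_(i0 < n) (if i0 == i then a else 0)) 0 i' * f i' = a * f i.
Proof.
rewrite (bigD1 i) //= mxE eqxx big1 ?addr0 // => i' ne.
by rewrite mxE (negbTE ne) mul0r.
Qed.

Lemma brhs_sig k : cvalid H k ->
  brhs R (sig k) = brhs R k - \sum_i bitR R c i * Arow R H k 0 i.
Proof.
case: k => [[i b]|[j T]] /= Hv.
  rewrite /bitR; case: (F2v (c 0 i)) => e; case: b; rewrite /= e /= sum_delta e /=; ring.
rewrite !card_sumR.
have -> : \sum_i (i \in symd T (Cj j))%:R =
   \sum_i (i \in T)%:R + \sum_i bitR R c i * Arow R H (inr (j, T)) 0 i :> R.
  rewrite -big_split; apply eq_bigr => i' _ /=.
  rewrite !mxE /symd /Cj /bitR !inE.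
  have sub := subsetP (andP Hv).1 i'; rewrite /Nrow inE in sub.
  case: (F2v (c 0 i')) => ->; rewrite /=;
  case: (i' \in T) sub => [-> //|_]; case: (H j i' == 1) => /=; ring.
ring.
Qed.

Lemma dotp_phi a w : box w ->
  dotp (phi c a) (relpt c w) = dotp a w - \sum_i bitR R c i * a 0 i.
Proof.
move=> bw; rewrite /dotp -sumrB; apply eq_bigr => i _.
move: (bw i) => b1; rewrite !mxE normb // /bitR.
by case: (F2v (c 0 i)) => ->; rewrite ?expr0 ?expr1 /=; ring.
Qed.

Lemma Ceven j : codeword H c -> ~~ odd #|Cj j|.
Proof.
move=> Hc; move: Hc; rewrite /codeword => /matrixP/(_ j 0); rewrite !mxE.
under eq_bigr => i _ do rewrite mxE.
have -> : \sum_i H j i * c 0 i = (#|Cj j|%:R : 'F_2).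
  rewrite card_sumR; apply eq_bigr => i _; rewrite /Cj /Nrow !inE.
  by case: (F2e (H j i)) => ->; case: (F2e (c 0 i)) => ->; apply/val_inj.
move/(congr1 val) => E; have h := @val_Fp_nat 2 isT #|Cj j|; rewrite modn2 in h.
have : (odd #|Cj j| : nat) = 0%N by rewrite -h E.
by case: odd.
Qed.

Lemma odd_symd T C : odd #|symd T C| = odd #|T| (+) odd #|C|.
Proof.
have -> : symd T C = (T :\: C) :|: (C :\: T).
  by apply/setP => i; rewrite !inE; case: (i \in T); case: (i \in C).
rewrite cardsU.
have -> : (T :\: C) :&: (C :\: T) = set0.
  by apply/setP => i; rewrite !inE; case: (i \in T); case: (i \in C).
rewrite cards0 subn0 -(cardsID C T) -(cardsID T C) setIC !oddD.
by case: (odd #|C :&: T|); case: (odd #|T :\: C|); case: (odd #|C :\: T|).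
Qed.

Lemma active_sig w k : codeword H c -> box w -> active H w k ->
  active H (relpt c w) (sig k).
Proof.
move=> Hc bw /andP [v /eqP e]; apply/andP; split.
  case: k v {e} => [[i b]|[j T]] //= /andP [sub o].
  rewrite odd_symd o (negbTE (Ceven j Hc)) andbT.
  apply/subsetP => i; rewrite /symd /Cj !inE.
  case: (boolP (i \in T)) => [/(subsetP sub)|] /=.
    by rewrite /Nrow inE => ->.
  by move=> _ /andP [->].
by apply/eqP; rewrite -(phi_Arow v) dotp_phi // e brhs_sig.
Qed.

Lemma cone_phi w x : codeword H c -> box w -> recovery_cone H w x ->
  recovery_cone H (relpt c w) (phi c x).
Proof.
move=> Hc bw [lam [l0 [lact ->]]].
exists (fun k => lam (sig k)); split => //; split.
  move=> k nz; rewrite -(sigK k); apply: active_sig => //; exact: lact.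
rewrite [RHS](reindex_inj (inv_inj sigK)) /= phi_sum.
apply eq_bigr => k _; rewrite sigK.
have [->|nz] := eqVneq (lam k) 0; first by rewrite !scale0r.
by rewrite phi_Arow //; case/andP: (lact k nz).
Qed.

Lemma fp_box x : fpolytope H x -> box x.
Proof.
move=> P i.
have h0 := P (inl (i, false)) erefl; have h1 := P (inl (i, true)) erefl.
rewrite /= /dotp sum_deltaL mul1r in h0.
rewrite /= /dotp sum_deltaL mulN1r lerN2 in h1.
by rewrite h0 h1.
Qed.

End Helpers.

Theorem proposition5 (R : realType) (m n r : nat) (H : 'M['F_2]_(m, n))
    (c : 'rV['F_2]_n) (w : 'rV[R]_n) (Psi : 'I_r -> 'rV[R]_n) :
  codeword H c ->
  LP_pseudocodeword H w ->
  (forall l, LP_pseudocodeword H (Psi l)) ->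
  isometry_onto (phi c) (recovery_cone H w) (recovery_cone H (relpt c w)) /\
  isometry_onto (phi c) (approx_cone w Psi)
    (approx_cone (relpt c w) (fun l => relpt c (Psi l))).
Proof.
move=> Hc [Pw _] HP.
have bw : box w := fp_box Pw.
have bP : forall l, box (Psi l) by move=> l; case: (HP l) => P _; exact: fp_box P.
split; split.
- by move=> x y _ _; exact: edist_phi.
- by move=> x; exact: cone_phi.
- move=> y Hy; exists (phi c y); split; last exact: phiK.
  by have := cone_phi Hc (box_relpt c bw) Hy; rewrite relptK.
- by move=> x y _ _; exact: edist_phi.
- by move=> x; exact: (approx_phi c bw bP).
- move=> y Hy; exists (phi c y); split; last exact: phiK.
  have := approx_phi c (box_relpt c bw) (fun l => box_relpt c (bP l)) Hy.
  by move=> A l; have := A l; rewrite !relptK.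
Qed.
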